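(* Let $f$, $u_{0s}$, $c_0$, $b_0$, $p$ be as in the context and assume $\|b_0\|_{L^1(-\infty,0)}<\infty$ and $\sup_{x\le0}|b_0(x)c_0(x)|<\infty$. Then there exists $\Lambda>0$ such that every $\sigma\in\mathbb{C}$ with $\Re(\sigma)>0$ and $\int_{-\infty}^{0}b_0(\xi)e^{-\sigma p(\xi)}\,d\xi=c_0(0)$ satisfies $|\Im(\sigma)|<\Lambda$.
   Context: Let $q>0$ and let $f:(-\infty,0]\times(0,\infty)\to[0,\infty)$ be such that for each $u>0$, $x\mapsto f(x,u)$ is continuous and integrable, $\partial f/\partial u$ exists and is continuous, and $\int_{-\infty}^0 f(x,u)\,dx=q/2$ independently of $u$. Let $u_{0s}=2\sqrt q$. Define $c_0(x)=\sqrt{2\int_{-\infty}^x f(y,u_{0s})\,dy}$ for $x\le0$ (so $c_0(0)=u_{0s}/2>0$), and assume $c_0(x)>0$ for all $x\le0$. Define $b_0(x)=\frac{\partial f}{\partial u}(x,u_{0s})+\frac{f(x,u_{0s})}{2c_0(x)}$ and $p(x)=\int_x^0 dy/c_0(y)$. *)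

(* Defs.v *)
From Stdlib Require Import Reals.
Open Scope R_scope.

Definition RInt_eq (g : R -> R) (a b v : R) : Prop :=
  exists pr : Riemann_integrable g a b, RiemannInt pr = v.

Definition improper_int_upto (g : R -> R) (a l : R) : Prop :=
  forall eps, 0 < eps -> exists N, forall M, N <= M ->
    exists v, RInt_eq g (-M) a v /\ Rabs (v - l) < eps.

Definition u0s (q : R) : R := 2 * sqrt q.

(* Ic x is meant to be \int_{-oo}^x f(y,u0s) dy *)
Definition c0 (Ic : R -> R) (x : R) : R := sqrt (2 * Ic x).

Definition b0 (f fu : R -> R -> R) (q : R) (Ic : R -> R) (x : R) : R :=
  fu x (u0s q) + f x (u0s q) / (2 * c0 Ic x).

(* Main.v *)
Require Import Defs.
From Stdlib Require Import Reals Lra.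
From Coquelicot Require Import Coquelicot.
Open Scope R_scope.

Lemma RInt_eq_conv g a b v : RInt_eq g a b v -> ex_RInt g a b /\ RInt g a b = v.
Proof.
  intros [pr Hpr]. split. apply ex_RInt_Reals_1; exact pr.
  rewrite (RInt_Reals g a b pr). exact Hpr.
Qed.

Lemma abs_RInt_le_fun (f k : R -> R) a b : a <= b -> ex_RInt f a b -> ex_RInt k a b ->
  (forall x, a <= x <= b -> Rabs (f x) <= k x) -> Rabs (RInt f a b) <= RInt k a b.
Proof.
  intros Hab Hf Hk H.
  apply (norm_RInt_le (V:=R_NormedModule) f k a b _ _ Hab H); apply (RInt_correct (V:=R_CompleteNormedModule)); assumption.
Qed.

Lemma Rmin0_lip x y : Rabs (Rmin y 0 - Rmin x 0) <= Rabs (y - x).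
Proof.
  unfold Rmin; destruct (Rle_dec y 0); destruct (Rle_dec x 0);
  unfold Rabs; repeat destruct (Rcase_abs _); lra.
Qed.

Lemma cont_min (k : R -> R) :
  (forall x, x <= 0 -> forall eps, 0 < eps -> exists d, 0 < d /\
     forall y, y <= 0 -> Rabs (y - x) < d -> Rabs (k y - k x) < eps) ->
  forall x, continuity_pt (fun y => k (Rmin y 0)) x.
Proof.
  intros Hk x eps Heps.
  destruct (Hk (Rmin x 0) (Rmin_r _ _) eps Heps) as [d [Hd Hy]].
  exists d; split; [exact Hd|].
  intros y [_ Hyx]. simpl. unfold R_dist.
  apply Hy. apply Rmin_r. eapply Rle_lt_trans. apply Rmin0_lip. exact Hyx.
Qed.

Lemma cont_min_eq (k : R -> R) x : x <= 0 -> Rmin x 0 = x.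
Proof. intros; unfold Rmin; destruct (Rle_dec x 0); lra. Qed.

Lemma exR (f : R -> R) a b : (forall x, continuity_pt f x) -> ex_RInt f a b.
Proof. intros H; apply (ex_RInt_continuous (V:=R_CompleteNormedModule)); intros z _; apply continuity_pt_filterlim; apply H. Qed.

Lemma RInt_add (f g : R -> R) a b : ex_RInt f a b -> ex_RInt g a b ->
  RInt (fun x => f x + g x) a b = RInt f a b + RInt g a b.
Proof. intros; apply (RInt_plus (V:=R_CompleteNormedModule)); auto. Qed.

Lemma RInt_sc (f : R -> R) a b l : ex_RInt f a b ->
  RInt (fun x => l * f x) a b = l * RInt f a b.
Proof. intros; apply (RInt_scal (V:=R_CompleteNormedModule)); auto. Qed.

Lemma RInt_chas (f : R -> R) a b c : ex_RInt f a b -> ex_RInt f b c ->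
  RInt f a c = RInt f a b + RInt f b c.
Proof. intros; symmetry; apply (RInt_Chasles (V:=R_CompleteNormedModule)); auto. Qed.

Lemma osc (h g G w : R -> R) (A0 B0 D eta Hm C : R) :
  0 <= D ->
  (forall x, continuity_pt h x) -> (forall x, continuity_pt g x) -> (forall x, continuity_pt w x) ->
  (forall x, is_derive G x (g x)) ->
  (forall x, A0 <= x <= B0 -> Rabs (g x) <= w x) ->
  (forall x, A0 <= x <= B0 -> Rabs (G x) <= C) ->
  (forall x, A0 <= x <= B0 -> Rabs (h x) <= Hm) ->
  (forall x y, A0 <= x <= B0 -> A0 <= y <= B0 -> Rabs (x - y) <= D -> Rabs (h x - h y) <= eta) ->
  forall n : nat, A0 + INR n * D <= B0 ->
  Rabs (RInt (fun x => h x * g x) A0 (A0 + INR n * D))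
    <= eta * RInt w A0 (A0 + INR n * D) + INR n * (2 * C * Hm).
Proof.
  intros HD Hh Hg Hw HG Hgw HGC Hhm Huc n.
  assert (Hhg : forall x, continuity_pt (fun x => h x * g x) x)
    by (intro; apply continuity_pt_mult; auto).
  induction n as [|n IH]; intros Hn.
  - simpl. rewrite Rmult_0_l, Rplus_0_r, RInt_point, RInt_point.
    change (Rabs 0 <= eta * 0 + 0 * (2 * C * Hm)). rewrite Rabs_R0; lra.
  - set (x0 := A0 + INR n * D).
    assert (Ex : A0 + INR (S n) * D = x0 + D) by (unfold x0; rewrite S_INR; ring).
    rewrite Ex in *. clear Ex.
    assert (Hx0 : A0 <= x0) by (unfold x0; assert (0 <= INR n) by apply pos_INR; nra).
    specialize (IH ltac:(unfold x0 in Hn; lra)). fold x0 in IH.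
    rewrite (RInt_chas _ A0 x0 (x0 + D)) by (apply exR; auto).
    rewrite (RInt_chas w A0 x0 (x0 + D)) by (apply exR; auto).
    assert (EG : RInt g x0 (x0 + D) = G (x0 + D) - G x0).
    { apply is_RInt_unique. apply (is_RInt_derive (V:=R_CompleteNormedModule)).
      intros; apply HG. intros; apply continuity_pt_filterlim; apply Hg. }
    assert (Ep : RInt (fun x => h x * g x) x0 (x0 + D) =
              RInt (fun x => (h x - h x0) * g x) x0 (x0 + D) + h x0 * (G (x0 + D) - G x0)).
    { rewrite <- EG, <- RInt_sc by (apply exR; auto).
      rewrite <- RInt_add.
      apply RInt_ext; intros; change (h x * g x = (h x - h x0) * g x + h x0 * g x); ring.
      apply exR; intro; apply continuity_pt_mult; auto; apply continuity_pt_minus; auto; apply continuity_pt_const; intros u v; reflexivity.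
      apply exR; intro; apply continuity_pt_mult; auto; apply continuity_pt_const; intros u v; reflexivity. }
    rewrite Ep.
    assert (B1 : Rabs (RInt (fun x => (h x - h x0) * g x) x0 (x0 + D)) <= RInt (fun x => eta * w x) x0 (x0 + D)).
    { apply abs_RInt_le_fun. lra.
      apply exR; intro; apply continuity_pt_mult; auto; apply continuity_pt_minus; auto; apply continuity_pt_const; intros u v; reflexivity.
      apply exR; intro; apply continuity_pt_mult; auto; apply continuity_pt_const; intros u v; reflexivity.
      intros x Hx. rewrite Rabs_mult. apply Rmult_le_compat; try apply Rabs_pos.
      apply Huc; try lra. rewrite Rabs_pos_eq; lra. apply Hgw; lra. }
    rewrite RInt_sc in B1 by (apply exR; auto).
    assert (B2 : Rabs (h x0 * (G (x0 + D) - G x0)) <= Hm * (C + C)).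
    { rewrite Rabs_mult. apply Rmult_le_compat; try apply Rabs_pos.
      apply Hhm; lra.
      eapply Rle_trans. apply Rabs_triang. rewrite Rabs_Ropp.
      apply Rplus_le_compat; apply HGC; lra. }
    rewrite S_INR.
    eapply Rle_trans. apply Rabs_triang.
    eapply Rle_trans. apply Rplus_le_compat. exact IH. 
    eapply Rle_trans. apply Rabs_triang. apply Rplus_le_compat. exact B1. exact B2.
    lra.
Qed.

Lemma small_zero z : (forall eps, 0 < eps -> Rabs z < eps) -> z = 0.
Proof.
  intros H. destruct (Req_dec z 0) as [|Hz]; auto.
  assert (Ha : 0 < Rabs z) by (apply Rabs_pos_lt; auto).
  specialize (H _ Ha); lra.
Qed.

Lemma Ic_diff (F Ic : R -> R) :
  (forall x, x <= 0 -> improper_int_upto F x (Ic x)) ->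
  forall x y, x <= y <= 0 -> ex_RInt F x y /\ Ic y - Ic x = RInt F x y.
Proof.
  intros HI x y Hxy.
  assert (Key : forall eps, 0 < eps -> ex_RInt F x y /\
            Rabs (Ic y - Ic x - RInt F x y) < 2 * eps).
  { intros eps Heps.
    destruct (HI x ltac:(lra) eps Heps) as [N1 H1].
    destruct (HI y ltac:(lra) eps Heps) as [N2 H2].
    set (M := Rmax (Rmax N1 N2) (- x)).
    assert (M1 : N1 <= M) by (unfold M; eapply Rle_trans; [apply Rmax_l|apply Rmax_l]).
    assert (M2 : N2 <= M) by (unfold M; eapply Rle_trans; [apply Rmax_r|apply Rmax_l]).
    assert (M3 : - x <= M) by (unfold M; apply Rmax_r).
    destruct (H1 M M1) as [v1 [R1 A1]]. destruct (H2 M M2) as [v2 [R2 A2]].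
    apply RInt_eq_conv in R1. apply RInt_eq_conv in R2.
    destruct R1 as [E1 V1]; destruct R2 as [E2 V2].
    assert (Exy : ex_RInt F x y) by (apply (ex_RInt_Chasles_2 (V:=R_CompleteNormedModule) F (-M) x y); auto; lra).
    split; auto.
    rewrite (RInt_chas F (-M) x y) in V2 by auto.
    rewrite V1 in V2.
    replace (Ic y - Ic x - RInt F x y) with (- (v2 - Ic y) + (v1 - Ic x)) by lra.
    eapply Rle_lt_trans. apply Rabs_triang. rewrite Rabs_Ropp. lra. }
  destruct (Key 1 Rlt_0_1) as [Hex _]. split; auto.
  apply Rminus_diag_uniq. apply small_zero. intros eps Heps.
  destruct (Key (eps/2) ltac:(lra)) as [_ K]. replace eps with (2 * (eps / 2)) by field. exact K.
Qed.

Lemma lim_conv (k : R -> R) x : limit1_in k (fun y => y <= 0) (k x) x ->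
  forall eps, 0 < eps -> exists d, 0 < d /\ forall y, y <= 0 -> Rabs (y - x) < d -> Rabs (k y - k x) < eps.
Proof.
  intros H eps Heps. destruct (H eps Heps) as [d [Hd H']]. exists d; split; auto.
  intros y Hy Hyx. apply (H' y). split; auto.
Qed.

Lemma Ic_cont (F Ic : R -> R) :
  (forall x, x <= 0 -> improper_int_upto F x (Ic x)) ->
  (forall x, x <= 0 -> limit1_in F (fun y => y <= 0) (F x) x) ->
  forall x, x <= 0 -> forall eps, 0 < eps -> exists d, 0 < d /\
     forall y, y <= 0 -> Rabs (y - x) < d -> Rabs (Ic y - Ic x) < eps.
Proof.
  intros HI HC x Hx eps Heps.
  destruct (lim_conv F x (HC x Hx) 1 Rlt_0_1) as [d1 [Hd1 H1]].
  set (B := Rabs (F x) + 1).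
  assert (HB : 0 < B) by (unfold B; assert (0 <= Rabs (F x)) by apply Rabs_pos; lra).
  exists (Rmin d1 (eps / B)). split. apply Rmin_pos; auto. apply Rdiv_lt_0_compat; auto.
  intros y Hy Hyx.
  assert (Hd1' : Rabs (y - x) < d1) by (eapply Rlt_le_trans; [exact Hyx | apply Rmin_l]).
  assert (Hd2 : Rabs (y - x) < eps / B) by (eapply Rlt_le_trans; [exact Hyx | apply Rmin_r]).
  assert (Bnd : forall u v, u <= v -> Rmin x y <= u -> v <= Rmax x y -> ex_RInt F u v ->
     Rabs (RInt F u v) <= B * (v - u)).
  { intros u v Huv Hu Hv Hex.
    assert (RC : RInt (fun _ => B) u v = B * (v - u)).
    { rewrite (RInt_const (V:=R_CompleteNormedModule)). change ((v - u) * B = B * (v - u)). ring. }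
    rewrite <- RC. apply abs_RInt_le_fun; auto.
    apply (ex_RInt_const (V:=R_NormedModule)).
    intros t Ht.
    assert (Ht0 : t <= 0) by (assert (Rmax x y <= 0) by (apply Rmax_lub; lra); lra).
    assert (Htx : Rabs (t - x) < d1).
    { eapply Rle_lt_trans; [|exact Hd1'].
      unfold Rmin, Rmax in *; destruct (Rle_dec x y); unfold Rabs; repeat destruct (Rcase_abs _); lra. }
    specialize (H1 t Ht0 Htx). unfold B.
    assert (Rabs (F t) - Rabs (F x) <= Rabs (F t - F x)) by apply Rabs_triang_inv. lra. }
  destruct (Rle_dec x y) as [Hle|Hlt].
  - destruct (Ic_diff F Ic HI x y ltac:(lra)) as [Ex Eq]. rewrite Eq.
    eapply Rle_lt_trans. apply Bnd; auto. rewrite Rmin_left; lra. rewrite Rmax_right; lra.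
    rewrite Rabs_pos_eq in Hd2 by lra.
    apply (Rmult_lt_compat_l B) in Hd2; auto. replace (B * (eps / B)) with eps in Hd2 by (field; lra). lra.
  - destruct (Ic_diff F Ic HI y x ltac:(lra)) as [Ex Eq].
    replace (Ic y - Ic x) with (- (Ic x - Ic y)) by ring. rewrite Rabs_Ropp, Eq.
    eapply Rle_lt_trans. apply Bnd; auto. lra. rewrite Rmin_right; lra. rewrite Rmax_left; lra.
    rewrite Rabs_left in Hd2 by lra.
    apply (Rmult_lt_compat_l B) in Hd2; auto. replace (B * (eps / B)) with eps in Hd2 by (field; lra). lra.
Qed.

Lemma Rabs_cos_le_1 x : Rabs (cos x) <= 1.
Proof. generalize (COS_bound x); unfold Rabs; destruct (Rcase_abs _); lra. Qed.
Lemma Rabs_sin_le_1 x : Rabs (sin x) <= 1.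
Proof. generalize (SIN_bound x); unfold Rabs; destruct (Rcase_abs _); lra. Qed.

Theorem theorem3
  (q : R) (f fu : R -> R -> R) (Ic p : R -> R)
  (Hq : 0 < q)
  (Hpos : forall x u, x <= 0 -> 0 < u -> 0 <= f x u)
  (Hcont : forall u x, 0 < u -> x <= 0 ->
      limit1_in (fun y => f y u) (fun y => y <= 0) (f x u) x)
  (Hint : forall u, 0 < u -> improper_int_upto (fun x => f x u) 0 (q / 2))
  (Hderiv : forall x u, x <= 0 -> 0 < u ->
      derivable_pt_lim (fun v => f x v) u (fu x u))
  (Hfu_cont : forall x u, x <= 0 -> 0 < u ->
      forall eps, 0 < eps -> exists delta, 0 < delta /\
        forall y v, y <= 0 -> 0 < v -> Rabs (y - x) < delta -> Rabs (v - u) < delta ->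
          Rabs (fu y v - fu x u) < eps)
  (HIc : forall x, x <= 0 -> improper_int_upto (fun y => f y (u0s q)) x (Ic x))
  (Hc0pos : forall x, x <= 0 -> 0 < c0 Ic x)
  (Hp : forall x, x <= 0 -> RInt_eq (fun y => / c0 Ic y) x 0 (p x))
  (Hb0L1 : exists L, improper_int_upto (fun x => Rabs (b0 f fu q Ic x)) 0 L)
  (Hb0c0 : exists K, forall x, x <= 0 -> Rabs (b0 f fu q Ic x * c0 Ic x) <= K) :
  exists Lambda, 0 < Lambda /\
    forall a b : R, 0 < a ->
      improper_int_upto
        (fun xi => b0 f fu q Ic xi * exp (- (a * p xi)) * cos (b * p xi)) 0 (c0 Ic 0) ->
      improper_int_upto
        (fun xi => b0 f fu q Ic xi * exp (- (a * p xi)) * sin (b * p xi)) 0 0 ->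
      Rabs b < Lambda.
Proof.
  set (u0 := u0s q).
  assert (Hu0 : 0 < u0) by (unfold u0, u0s; assert (0 < sqrt q) by (apply sqrt_lt_R0; auto); lra).
  set (F := fun x => f x u0).
  assert (Icc : forall x, x <= 0 -> forall eps, 0 < eps -> exists d, 0 < d /\
     forall y, y <= 0 -> Rabs (y - x) < d -> Rabs (Ic y - Ic x) < eps).
  { apply (Ic_cont F Ic); auto. intros x Hx. apply (Hcont u0 x Hu0 Hx). }
  set (ct := fun x => c0 Ic (Rmin x 0)).
  assert (ctpos : forall x, 0 < ct x) by (intro x; apply Hc0pos, Rmin_r).
  assert (ctc : forall x, continuity_pt ct x).
  { intro x. unfold ct, c0.
    assert (Hc1 : continuity_pt (fun y => 2 * Ic (Rmin y 0)) x).
    { apply continuity_pt_mult. apply continuity_pt_const; intros u v; reflexivity.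
      apply (cont_min Ic Icc). }
    assert (Hpos2 : 0 <= 2 * Ic (Rmin x 0)).
    { destruct (Rle_dec 0 (2 * Ic (Rmin x 0))) as [|Hn]; auto.
      assert (H0 := Hc0pos (Rmin x 0) (Rmin_r _ _)). unfold c0 in H0.
      rewrite sqrt_neg_0 in H0; lra. }
    exact (continuity_pt_comp _ sqrt x Hc1 (continuity_pt_sqrt _ Hpos2)). }
  set (w := fun x => / ct x).
  assert (wc : forall x, continuity_pt w x).
  { intro x. apply continuity_pt_inv. apply ctc. apply Rgt_not_eq, ctpos. }
  assert (wpos : forall x, 0 < w x) by (intro; apply Rinv_0_lt_compat, ctpos).
  set (ht := fun x => b0 f fu q Ic (Rmin x 0) * c0 Ic (Rmin x 0)).
  assert (htc : forall x, continuity_pt ht x).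
  { intro x.
    assert (E : forall y, ht y = fu (Rmin y 0) u0 * ct y + F (Rmin y 0) / 2).
    { intro y. unfold ht, ct, F, b0, u0. assert (H0 := Hc0pos (Rmin y 0) (Rmin_r _ _)).
      field. lra. }
    apply (continuity_pt_ext (fun y => fu (Rmin y 0) u0 * ct y + F (Rmin y 0) / 2)).
    intro y; symmetry; apply E.
    apply continuity_pt_plus. apply continuity_pt_mult; auto.
    apply (cont_min (fun y => fu y u0)).
    { intros x0 Hx0 eps Heps. destruct (Hfu_cont x0 u0 Hx0 Hu0 eps Heps) as [d [Hd Hd']].
      exists d; split; auto. intros y Hy Hyx. apply Hd'; auto. rewrite Rminus_diag, Rabs_R0; auto. }
    apply continuity_pt_div. apply (cont_min F).
    { intros x0 Hx0. apply lim_conv. apply (Hcont u0 x0 Hu0 Hx0). }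
    apply continuity_pt_const; intros u v; reflexivity. lra. }
  set (P := fun x => RInt w x 0).
  assert (wex : forall u v, ex_RInt w u v) by (intros; apply exR; auto).
  assert (HP' : forall x, is_derive P x (- w x)).
  { intro x. apply (is_derive_RInt' (V:=R_NormedModule) w P x 0).
    apply filter_forall. intro y. apply (RInt_correct (V:=R_CompleteNormedModule)); auto.
    apply continuity_pt_filterlim; auto. }
  assert (Pnn : forall x, x <= 0 -> 0 <= P x).
  { intros x Hx. apply RInt_ge_0; auto. intros; apply Rlt_le; auto. }
  assert (Peq : forall x, x <= 0 -> P x = p x).
  { intros x Hx. destruct (RInt_eq_conv _ _ _ _ (Hp x Hx)) as [_ E]. rewrite <- E.
    unfold P. apply RInt_ext. intros y Hy. rewrite Rmin_left, Rmax_right in Hy by lra.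
    unfold w, ct. rewrite Rmin_left by lra. reflexivity. }
  assert (c00 : 0 < c0 Ic 0) by (apply Hc0pos; lra).
  set (eps := c0 Ic 0 / 6).
  assert (Heps : 0 < eps) by (unfold eps; lra).
  destruct Hb0L1 as [L HL]. destruct (HL eps Heps) as [N1 HN1].
  set (M := Rmax N1 1).
  assert (MN1 : N1 <= M) by apply Rmax_l.
  assert (M1 : 1 <= M) by apply Rmax_r.
  set (W := RInt w (-M) 0).
  assert (HW : 0 <= W) by (apply (Pnn (-M)); lra).
  set (eta := eps / (W + 1)).
  assert (Heta : 0 < eta) by (unfold eta; apply Rdiv_lt_0_compat; lra).
  assert (HetaW : eta * W < eps).
  { unfold eta. apply (Rmult_lt_reg_r (W + 1)). lra.
    replace (eps / (W + 1) * W * (W + 1)) with (eps * W) by (field; lra). nra. }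
  destruct (Heine ht (fun c => -M <= c <= 0) (compact_P3 (-M) 0) (fun x _ => htc x)
     (mkposreal eta Heta)) as [[del Hdel] Hunif]. simpl in Hunif.
  destruct (archimed_cor1 (del / M)) as [n [Hn Hn0]].
  { apply Rdiv_lt_0_compat; lra. }
  assert (Hn' : 0 < INR n) by (apply lt_0_INR; auto).
  set (D := M / INR n).
  assert (HD : 0 < D) by (unfold D; apply Rdiv_lt_0_compat; lra).
  assert (HDdel : D < del).
  { unfold D. apply (Rmult_lt_compat_l M) in Hn; [|lra].
    replace (M * (del / M)) with del in Hn by (field; lra). unfold Rdiv. lra. }
  assert (HnD : -M + INR n * D = 0) by (unfold D; field; lra).
  destruct Hb0c0 as [K HK].
  assert (K0 : 0 <= K) by (eapply Rle_trans; [apply Rabs_pos | apply (HK 0); lra]).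
  exists (4 * INR n * K / eps + 1). split.
  { assert (0 <= 4 * INR n * K / eps) by (apply Rmult_le_pos; [nra | apply Rlt_le, Rinv_0_lt_compat; auto]). lra. }
  intros a b Ha Hcos _.
  apply Rnot_le_lt; intro Hb.
  assert (Hbig : 4 * INR n * K / eps + 1 <= Rabs b) by exact Hb. clear Hb.
  assert (Hb4 : 4 * INR n * K < eps * Rabs b).
  { assert (0 <= 4 * INR n * K / eps) by (apply Rmult_le_pos; [nra | apply Rlt_le, Rinv_0_lt_compat; auto]).
    assert (E : 4 * INR n * K = eps * (4 * INR n * K / eps)) by (field; lra). nra. }
  assert (bpos : 0 < Rabs b).
  { assert (0 <= 4 * INR n * K / eps) by (apply Rmult_le_pos; [nra | apply Rlt_le, Rinv_0_lt_compat; auto]). lra. }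
  assert (ab0 : 0 < a * a + b * b) by nra.
  set (Fb := fun s => exp (-(a*s)) * (b * sin (b*s) - a * cos (b*s)) / (a*a+b*b)).
  assert (HFb : forall s, is_derive Fb s (exp (-(a*s)) * cos (b*s))).
  { intro s. unfold Fb. auto_derive. trivial. field. lra. }
  set (G := fun x => - Fb (P x)).
  set (g := fun x => exp (-(a * P x)) * cos (b * P x) * w x).
  assert (HG : forall x, is_derive G x (g x)).
  { intro x. assert (H := is_derive_opp _ _ _ (is_derive_comp Fb P x _ _ (HFb (P x)) (HP' x))).
    unfold G, g. revert H. unfold scal, opp; simpl. unfold mult; simpl.
    intro H. replace (exp (- (a * P x)) * cos (b * P x) * w x) with
      (- (- w x * (exp (- (a * P x)) * cos (b * P x)))) by ring. exact H. }
  assert (Pc : forall x, continuity_pt P x).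
  { intro x. apply continuity_pt_filterlim. apply (ex_derive_continuous (V:=R_NormedModule)).
    eexists; apply HP'. }
  assert (gc : forall x, continuity_pt g x).
  { intro x. unfold g. apply continuity_pt_mult; [apply continuity_pt_mult|apply wc].
    - apply (continuity_pt_comp (fun y => - (a * P y)) exp).
      apply continuity_pt_opp, continuity_pt_mult; auto. apply continuity_pt_const; intros u v; reflexivity.
      apply derivable_continuous_pt, derivable_pt_exp.
    - apply (continuity_pt_comp (fun y => b * P y) cos).
      apply continuity_pt_mult; auto. apply continuity_pt_const; intros u v; reflexivity.
      apply derivable_continuous_pt, derivable_pt_cos. }
  assert (expb : forall x, x <= 0 -> 0 < exp (-(a * P x)) <= 1).
  { intros x Hx. split. apply exp_pos. rewrite <- exp_0.
    assert (0 <= P x) by auto.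
    destruct (Rle_lt_or_eq_dec (-(a * P x)) 0) as [Hl|He]. nra.
    apply Rlt_le, exp_increasing; auto. rewrite He; lra. }
  assert (Hgw : forall x, -M <= x <= 0 -> Rabs (g x) <= w x).
  { intros x Hx. unfold g. rewrite !Rabs_mult. rewrite (Rabs_pos_eq (w x)) by (apply Rlt_le; auto).
    rewrite Rabs_pos_eq by (apply Rlt_le, exp_pos).
    assert (Rabs (cos (b * P x)) <= 1) by apply Rabs_cos_le_1.
    assert (0 <= Rabs (cos (b * P x))) by apply Rabs_pos.
    specialize (expb x ltac:(lra)). specialize (wpos x). assert (exp (- (a * P x)) * Rabs (cos (b * P x)) <= 1) by nra. nra. }
  assert (HGC : forall x, -M <= x <= 0 -> Rabs (G x) <= 2 / Rabs b).
  { intros x Hx. unfold G, Fb. rewrite Rabs_Ropp. unfold Rdiv. rewrite !Rabs_mult.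
    rewrite Rabs_pos_eq by (apply Rlt_le, exp_pos).
    rewrite Rabs_inv, (Rabs_pos_eq (a*a+b*b)) by lra.
    specialize (expb x ltac:(lra)).
    assert (B1 : Rabs (b * sin (b * P x) - a * cos (b * P x)) <= Rabs a + Rabs b).
    { eapply Rle_trans. apply Rabs_triang. rewrite Rabs_Ropp, !Rabs_mult.
      assert (Rabs (sin (b * P x)) <= 1) by apply Rabs_sin_le_1.
      assert (Rabs (cos (b * P x)) <= 1) by apply Rabs_cos_le_1.
      assert (0 <= Rabs (sin (b * P x))) by apply Rabs_pos.
      assert (0 <= Rabs (cos (b * P x))) by apply Rabs_pos.
      assert (0 <= Rabs a) by apply Rabs_pos. nra. }
    assert (B2 : (Rabs a + Rabs b) * / (a * a + b * b) <= 2 * / Rabs b).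
    { apply (Rmult_le_reg_r ((a*a+b*b) * Rabs b)). nra.
      replace ((Rabs a + Rabs b) * / (a * a + b * b) * ((a * a + b * b) * Rabs b)) with ((Rabs a + Rabs b) * Rabs b) by (field; lra).
      replace (2 * / Rabs b * ((a * a + b * b) * Rabs b)) with (2 * (a*a+b*b)) by (field; lra).
      assert (Ea : Rabs a * Rabs a = a * a) by (rewrite <- Rabs_mult; apply Rabs_pos_eq; nra).
      assert (Eb : Rabs b * Rabs b = b * b) by (rewrite <- Rabs_mult; apply Rabs_pos_eq; nra).
      assert (0 <= Rabs a) by apply Rabs_pos. nra. }
    assert (0 <= Rabs (b * sin (b * P x) - a * cos (b * P x))) by apply Rabs_pos.
    assert (0 < / (a * a + b * b)) by (apply Rinv_0_lt_compat; lra).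
    apply Rle_trans with (1 * ((Rabs a + Rabs b) * / (a * a + b * b))). 2: lra.
    rewrite <- Rmult_assoc. apply Rmult_le_compat; try nra. }
  assert (Hhm : forall x, -M <= x <= 0 -> Rabs (ht x) <= K).
  { intros x _. apply HK, Rmin_r. }
  assert (Huc : forall x y, -M <= x <= 0 -> -M <= y <= 0 -> Rabs (x - y) <= D -> Rabs (ht x - ht y) <= eta).
  { intros x y Hx Hy Hxy. apply Rlt_le, Hunif; auto. lra. }
  assert (Hosc := osc ht g G w (-M) 0 D eta K (2 / Rabs b) ltac:(lra) htc gc wc HG Hgw HGC Hhm Huc n
     ltac:(lra)).
  rewrite HnD in Hosc. fold W in Hosc.
  assert (Hmain : Rabs (RInt (fun x => ht x * g x) (-M) 0) < 2 * eps).
  { eapply Rle_lt_trans. exact Hosc.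
    assert (E : INR n * (2 * (2 / Rabs b) * K) = 4 * INR n * K / Rabs b) by (field; lra).
    rewrite E. assert (4 * INR n * K / Rabs b < eps).
    { apply (Rmult_lt_reg_r (Rabs b)); auto. replace (4 * INR n * K / Rabs b * Rabs b) with (4 * INR n * K) by (field; lra). lra. }
    lra. }
  set (cf := fun xi => b0 f fu q Ic xi * exp (- (a * p xi)) * cos (b * p xi)).
  assert (Ecf : RInt cf (-M) 0 = RInt (fun x => ht x * g x) (-M) 0).
  { assert (pt : forall x, -M < x < 0 -> cf x = ht x * g x).
    { intros x Hx. unfold cf, ht, g, w, ct. rewrite Rmin_left by lra. rewrite Peq by lra.
      assert (0 < c0 Ic x) by (apply Hc0pos; lra). field. lra. }
    apply RInt_ext. intros x Hx. rewrite Rmin_left, Rmax_right in Hx by lra. apply pt; auto. }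
  destruct (Hcos eps Heps) as [N2 HN2].
  set (M' := Rmax N2 M).
  assert (M'2 : N2 <= M') by apply Rmax_l.
  assert (M'M : M <= M') by apply Rmax_r.
  destruct (HN2 M' M'2) as [v [Rv Av]].
  destruct (HN1 M' ltac:(lra)) as [v1 [Rv1 Av1]].
  destruct (HN1 M ltac:(lra)) as [v2 [Rv2 Av2]].
  apply RInt_eq_conv in Rv. apply RInt_eq_conv in Rv1. apply RInt_eq_conv in Rv2.
  destruct Rv as [Ev Vv]. destruct Rv1 as [Ev1 Vv1]. destruct Rv2 as [Ev2 Vv2].
  fold cf in Ev, Vv.
  assert (Ec1 : ex_RInt cf (-M') (-M)) by (apply (ex_RInt_Chasles_1 (V:=R_CompleteNormedModule) cf (-M') (-M) 0); auto; lra).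
  assert (Ec2 : ex_RInt cf (-M) 0) by (apply (ex_RInt_Chasles_2 (V:=R_CompleteNormedModule) cf (-M') (-M) 0); auto; lra).
  assert (Ea1 : ex_RInt (fun x => Rabs (b0 f fu q Ic x)) (-M') (-M))
    by (apply (ex_RInt_Chasles_1 (V:=R_CompleteNormedModule) _ (-M') (-M) 0); auto; lra).
  rewrite (RInt_chas cf (-M') (-M) 0) in Vv by auto.
  rewrite (RInt_chas _ (-M') (-M) 0) in Vv1 by auto.
  rewrite Vv2 in Vv1.
  assert (Htail : Rabs (RInt cf (-M') (-M)) <= RInt (fun x => Rabs (b0 f fu q Ic x)) (-M') (-M)).
  { apply abs_RInt_le_fun; auto. lra. intros x Hx. unfold cf.
    assert (Hpx : 0 <= p x) by (rewrite <- Peq by lra; apply Pnn; lra).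
    assert (He : 0 < exp (- (a * p x)) <= 1) by (rewrite <- Peq by lra; apply expb; lra).
    rewrite !Rabs_mult. rewrite (Rabs_pos_eq (exp _)) by lra.
    assert (Rabs (cos (b * p x)) <= 1) by apply Rabs_cos_le_1.
    assert (0 <= Rabs (cos (b * p x))) by apply Rabs_pos.
    assert (0 <= Rabs (b0 f fu q Ic x)) by apply Rabs_pos.
    assert (exp (- (a * p x)) * Rabs (cos (b * p x)) <= 1) by nra. nra. }
  rewrite Ecf in Vv.
  clear -Htail Hmain Vv Vv1 Av Av1 Av2 Heps c00.
  unfold eps in *.
  revert Htail Hmain Vv Vv1 Av Av1 Av2.
  generalize (RInt cf (-M') (-M)) (RInt (fun x => ht x * g x) (-M) 0)
    (RInt (fun x => Rabs (b0 f fu q Ic x)) (-M') (-M)).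
  intros r1 r2 r3. unfold Rabs; repeat destruct (Rcase_abs _); intros; lra.
Qed.
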